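(* Let $V$ be a nonlocal vertex algebra and let $\mathcal S(x)$ be a unitary rational quantum Yang–Baxter operator on $V$. Then: (a) $\mathcal S(x)(\mathbf 1\otimes v)=\mathbf 1\otimes v$ for all $v\in V$ if and only if $\mathcal S(x)(v\otimes\mathbf 1)=v\otimes\mathbf 1$ for all $v\in V$; (b) $[\mathcal D\otimes1,\mathcal S(x)]=-\frac{d}{dx}\mathcal S(x)$ if and only if $[1\otimes\mathcal D,\mathcal S^{-1}(x)]=\frac{d}{dx}\mathcal S^{-1}(x)$; (c) $\mathcal S(x_1)(Y(x_2)\otimes1)=(Y(x_2)\otimes1)\mathcal S^{23}(x_1)\mathcal S^{13}(x_1+x_2)$ if and only if $\mathcal S(x_1)(1\otimes Y(x_2))=(1\otimes Y(x_2))\mathcal S^{12}(x_1-x_2)\mathcal S^{13}(x_1)$.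
   Context: All vector spaces are over $\mathbb{C}$. A nonlocal vertex algebra is a vector space $V$ with a linear map $Y(\cdot,x):V\to \mathrm{Hom}(V,V((x)))$, $v\mapsto Y(v,x)=\sum_{n\in\mathbb Z}v_nx^{-n-1}$, and a vector $\mathbf 1\in V$ such that for all $v$: $Y(\mathbf 1,x)v=v$, $Y(v,x)\mathbf 1\in V[[x]]$, $\lim_{x\to0}Y(v,x)\mathbf 1=v$; and for all $u,v,w$ there is $k\ge0$ with $(x_0+x_2)^kY(u,x_0+x_2)Y(v,x_2)w=(x_0+x_2)^kY(Y(u,x_0)v,x_2)w$. Write $Y(x):V\otimes V\to V((x))$, $Y(x)(u\otimes v)=Y(u,x)v$, and $\mathcal Dv=v_{-2}\mathbf 1$. Conventions: $f(x_1\pm x_2)$ for $f\in\mathbb C((x))$ is expanded in nonnegative powers of the second variable; for a linear map $T$ on a tensor product, $T^{ij}$ denotes $T$ acting on the $i$-th and $j$-th tensor factors (identity elsewhere); maps are extended linearly over scalar formal series. A rational quantum Yang–Baxter operator on $V$ is a linear map $\mathcal S(x):V\otimes V\to V\otimes V\otimes\mathbb C((x))$ with $\mathcal S^{12}(x)\mathcal S^{13}(x+z)\mathcal S^{23}(z)=\mathcal S^{23}(z)\mathcal S^{13}(x+z)\mathcal S^{12}(x)$; it is unitary if $\mathcal S(x)\mathcal S^{21}(-x)=1$, where $\mathcal S^{21}(x)=\sigma\mathcal S(x)\sigma$ with $\sigma$ the flip on $V\otimes V$. Then $\mathcal S^{-1}(x)=\mathcal S^{21}(-x)$ denotes the inverse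 of the $\mathbb C((x))$-linear extension of $\mathcal S(x)$. *)

(* Defs.v *)
From mathcomp Require Import all_boot all_algebra.
From mathcomp Require Import classical_sets cardinality fsbigop.
From mathcomp Require Import Rstruct complex.
Set Implicit Arguments. Unset Strict Implicit. Unset Printing Implicit Defensive.
Import GRing.Theory Num.Theory.
Local Open Scope ring_scope.

Definition C : fieldType := complex Rdefinitions.R.

(* Sum of a (finitely supported) family of scalars; all sums below are over
   families that are finitely supported when the data are as in the paper. *)
Definition fsum {T : choiceType} (f : T -> C) : C := \sum_(t \in [set: T]) f t.

Definition fin_supp {T : Type} (f : T -> C) : Prop :=
  finite_set [set t | f t != 0].

Definition ibin (a : int) (k : nat) : C :=
  (\prod_(i < k) (a - (i : nat)%:Z)%:~R) / (k`!)%:R.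

(* V is the vector space with basis I: a vector is a finitely
   supported function I -> C.  V(x)V has basis I*I, V(x)V(x)V has basis
   (I*I)*I.  An element of V(x)V(x)C((x)) = (+)_{I*I} C((x)) is a
   finitely supported function I*I -> (int -> C), the int giving the
   exponent of x.  Elements of V(x)V(x)V(x)C((x))((z)) are functions
   (I*I)*I -> int -> int -> C (first int: exponent of x, second: of z).  *)

Section Defs.
Context (I : choiceType).
Local Notation I2 := (I * I)%type.
Local Notation I3 := ((I * I) * I)%type.

Definition basis (j : I) : I -> C := fun i => if i == j then 1 else 0.

Definition ten (u v : I -> C) : I2 -> C := fun p => u p.1 * v p.2.

(* ---------- vertex operator ----------
   y a b n = coefficient of x^n in Y(e_a, x) e_b  (a vector of V).
   Yv u v n = coefficient of x^n in Y(u,x) v (bilinear extension). *)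
Definition Yv (y : I -> I -> int -> I -> C) (u v : I -> C) (n : int) : I -> C :=
  fun i => fsum (fun a => fsum (fun b => u a * v b * y a b n i)).

(* coefficient of x0^p x2^q in Y(u,x0+x2) Y(v,x2) w,
   (x0+x2)^m expanded in nonnegative powers of x2 *)
Definition YY_l y (u v w : I -> C) (p q : int) : I -> C :=
  fun i => fsum (fun n : int =>
    if n <= q then ibin (p + q - n) `|q - n|%N * Yv y u (Yv y v w n) (p + q - n) i
    else 0).

(* coefficient of x0^p x2^q in Y(Y(u,x0)v, x2) w *)
Definition YY_r y (u v w : I -> C) (p q : int) : I -> C :=
  Yv y (Yv y u v p) w q.

(* multiplication of a series in x0, x2 by (x0+x2)^k *)
Definition mulpow (k : nat) (F : int -> int -> I -> C) (p q : int) : I -> C :=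
  fun i => \sum_(j < k.+1) ('C(k, j))%:R * F (p - (k - j)%N%:Z) (q - (j : nat)%:Z) i.

Definition nonlocal_va (y : I -> I -> int -> I -> C) (vac : I -> C) : Prop :=
  (* Y(e_a,x)e_b in V((x)) *)
  (forall a b n, fin_supp (y a b n)) /\
  (forall a b, exists N : int, forall n, n < N -> forall i, y a b n i = 0) /\
  fin_supp vac /\
  (forall v, fin_supp v -> forall n i, Yv y vac v n i = if n == 0 then v i else 0) /\
  (forall v, fin_supp v -> forall n, n < 0 -> forall i, Yv y v vac n i = 0) /\
  (forall v, fin_supp v -> forall i, Yv y v vac 0 i = v i) /\
  (forall u v w, fin_supp u -> fin_supp v -> fin_supp w ->
     exists k : nat, forall p q i,
       mulpow k (YY_l y u v w) p q i = mulpow k (YY_r y u v w) p q i).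

(* D v = v_{-2} 1 = coefficient of x^1 in Y(v,x)1 ; Dm = matrix of D *)
Definition Dv y (vac v : I -> C) : I -> C := Yv y v vac 1.
Definition Dm y (vac : I -> C) (i a : I) : C := Dv y vac (basis a) i.

(* ---------- operators on V(x)V(x)C((x)) ----------
   An operator S(x) : V(x)V -> V(x)V(x)C((x)) is given by sc p q n =
   coefficient of e_p x^n in S(x)(e_q). *)
Definition cst (w : I2 -> C) : I2 -> int -> C := fun p n => if n == 0 then w p else 0.

(* C((x))-linear extension applied to an element of V(x)V(x)C((x)) *)
Definition lapp (M : I2 -> I2 -> int -> C) (u : I2 -> int -> C) : I2 -> int -> C :=
  fun p n => fsum (fun q => fsum (fun m => M p q m * u q (n - m))).

Definition flip (p : I2) : I2 := (p.2, p.1).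
Definition S21 (sc : I2 -> I2 -> int -> C) : I2 -> I2 -> int -> C :=
  fun p q n => sc (flip p) (flip q) n.
(* S^{-1}(x) := S^{21}(-x) *)
Definition Sinv (sc : I2 -> I2 -> int -> C) : I2 -> I2 -> int -> C :=
  fun p q n => (-1) ^ n * S21 sc p q n.
Definition lder (M : I2 -> I2 -> int -> C) : I2 -> I2 -> int -> C :=
  fun p q n => (n + 1)%:~R * M p q (n + 1).
Definition DL (Dmat : I -> I -> C) (u : I2 -> int -> C) : I2 -> int -> C :=
  fun p n => fsum (fun a => Dmat p.1 a * u (a, p.2) n).
Definition DR (Dmat : I -> I -> C) (u : I2 -> int -> C) : I2 -> int -> C :=
  fun p n => fsum (fun b => Dmat p.2 b * u (p.1, b) n).

Definition dcst (w : I3 -> C) : I3 -> int -> int -> C :=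
  fun p m n => if (m == 0) && (n == 0) then w p else 0.
Definition dapp (M : I3 -> I3 -> int -> int -> C) (u : I3 -> int -> int -> C)
  : I3 -> int -> int -> C :=
  fun p m n => fsum (fun r => fsum (fun n1 : int => fsum (fun m1 : int =>
      M p r m1 n1 * u r (m - m1) (n - n1)))).

Definition S12_x sc : I3 -> I3 -> int -> int -> C := fun p q m n =>
  if (n == 0) && (p.2 == q.2) then sc (p.1.1, p.1.2) (q.1.1, q.1.2) m else 0.
Definition S13_x sc : I3 -> I3 -> int -> int -> C := fun p q m n =>
  if (n == 0) && (p.1.2 == q.1.2) then sc (p.1.1, p.2) (q.1.1, q.2) m else 0.
Definition S23_x sc : I3 -> I3 -> int -> int -> C := fun p q m n =>
  if (n == 0) && (p.1.1 == q.1.1) then sc (p.1.2, p.2) (q.1.2, q.2) m else 0.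
Definition S23_z sc : I3 -> I3 -> int -> int -> C := fun p q m n =>
  if (m == 0) && (p.1.1 == q.1.1) then sc (p.1.2, p.2) (q.1.2, q.2) n else 0.
(* S^{13}(x+z), expanded in nonnegative powers of z *)
Definition S13_xpz sc : I3 -> I3 -> int -> int -> C := fun p q m n =>
  if (0 <= n) && (p.1.2 == q.1.2)
  then ibin (m + n) `|n|%N * sc (p.1.1, p.2) (q.1.1, q.2) (m + n) else 0.
(* S^{12}(x-z), expanded in nonnegative powers of z *)
Definition S12_xmz sc : I3 -> I3 -> int -> int -> C := fun p q m n =>
  if (0 <= n) && (p.2 == q.2)
  then (-1) ^ n * ibin (m + n) `|n|%N * sc (p.1.1, p.1.2) (q.1.1, q.1.2) (m + n)
  else 0.

Definition rqyb_operator (sc : I2 -> I2 -> int -> C) : Prop :=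
  (* S(x)(e_q) in V(x)V(x)C((x)) *)
  (forall q, finite_set [set p | exists n, sc p q n != 0]) /\
  (forall p q, exists N : int, forall n, n < N -> sc p q n = 0) /\
  (forall w : I3 -> C, fin_supp w ->
     dapp (S12_x sc) (dapp (S13_xpz sc) (dapp (S23_z sc) (dcst w)))
     = dapp (S23_z sc) (dapp (S13_xpz sc) (dapp (S12_x sc) (dcst w)))).

Definition unitary (sc : I2 -> I2 -> int -> C) : Prop :=
  forall w : I2 -> C, fin_supp w -> lapp sc (lapp (Sinv sc) (cst w)) = cst w.

(* (Y(x2)(x)1) w, w in V(x)V(x)V : coefficient of x2^n *)
Definition Y1 y (w : I3 -> C) : I2 -> int -> C :=
  fun p n => fsum (fun ab : I2 => w (ab, p.2) * y ab.1 ab.2 n p.1).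
Definition Y2 y (w : I3 -> C) : I2 -> int -> C :=
  fun p n => fsum (fun bc : I2 => w ((p.1, bc.1), bc.2) * y bc.1 bc.2 n p.2).
(* S(x1) applied to an element of (V(x)V)((x2)) : coefficient of x1^m x2^n *)
Definition Sser (sc : I2 -> I2 -> int -> C) (u : I2 -> int -> C)
  : I2 -> int -> int -> C :=
  fun p m n => fsum (fun q => sc p q m * u q n).
Definition Y1d y (u : I3 -> int -> int -> C) : I2 -> int -> int -> C :=
  fun p m n => fsum (fun ab : I2 => fsum (fun k : int =>
      y ab.1 ab.2 k p.1 * u (ab, p.2) m (n - k))).
Definition Y2d y (u : I3 -> int -> int -> C) : I2 -> int -> int -> C :=
  fun p m n => fsum (fun bc : I2 => fsum (fun k : int =>
      y bc.1 bc.2 k p.2 * u ((p.1, bc.1), bc.2) m (n - k))).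

End Defs.

(* Main.v *)
Require Import Defs.
From mathcomp Require Import all_boot all_algebra.
From mathcomp Require Import classical_sets cardinality fsbigop.
From mathcomp Require Import Rstruct complex boolp.
From mathcomp Require Import order finmap ring lra zify.
Import Order.TTheory GRing.Theory Num.Theory.
Local Open Scope ring_scope.
Local Open Scope classical_set_scope.

Lemma fsum_ext {T : choiceType} (f g : T -> C) : (forall t, f t = g t) -> fsum f = fsum g.
Proof. by move=> e; congr fsum; apply: funext. Qed.

Lemma fsum_pair {A B : choiceType} (F : A -> B -> C) :
  finite_set [set t : A * B | F t.1 t.2 != 0] ->
  fsum (fun a => fsum (fun b => F a b)) = fsum (fun t : A * B => F t.1 t.2).
Proof.
move=> fS; set S := [set t : A * B | F t.1 t.2 != 0] in fS.
have fP : finite_set (fst @` S) by exact: finite_image.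
have fQ : finite_set (snd @` S) by exact: finite_image.
have inner a : fsum (fun b => F a b) = \sum_(b \in snd @` S) F a b.
  rewrite /fsum; apply/esym/fsbig_widen => // b [_ nQ].
  case: (eqVneq (F a b) 0) => // h; exfalso; apply: nQ; by exists (a, b).
rewrite /fsum.
transitivity (\sum_(a \in fst @` S) \sum_(b \in snd @` S) F a b).
  rewrite -(@fsbig_widen _ _ _ _ (fst @` S) [set: A]) //.
    by apply: eq_fsbigr => a _; exact: inner.
  move=> a [_ nP]; rewrite /preimage /= (_ : \sum_(t \in [set: B]) F a t = \sum_(b \in snd @` S) F a b); last exact: inner a.
  rewrite fsbig1 // => b _.
  case: (eqVneq (F a b) 0) => // h; exfalso; apply: nP; by exists (a, b).
rewrite pair_fsbig //; apply: fsbig_widen => // t [_ nt].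
case: (eqVneq (F t.1 t.2) 0) => // h; exfalso; by apply: nt; split; [exists t | exists t].
Qed.

Lemma finite_sec {A B : Type} (f : A -> B) (S : set B) :
  injective f -> finite_set S -> finite_set (f @^-1` S).
Proof. by move=> fi; apply: finite_preimage => x y _ _; exact: fi. Qed.

Lemma int_itv_fin (lo hi : int) : finite_set [set k : int | lo <= k <= hi].
Proof.
have fI : finite_set ((fun i : nat => lo + i%:Z) @` `I_(absz (hi - lo)).+1).
  by apply: finite_image; exact: finite_II.
apply: (sub_finite_set _ fI) => k /= /andP[h1 h2].
exists (absz (k - lo)); rewrite /=; lia.
Qed.

Lemma flat6 {T1 T2 T3 T4 T5 T6 : choiceType}
  (F : T1 -> T2 -> T3 -> T4 -> T5 -> T6 -> C) :
  finite_set [set t : T1 * (T2 * (T3 * (T4 * (T5 * T6)))) |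
     F t.1 t.2.1 t.2.2.1 t.2.2.2.1 t.2.2.2.2.1 t.2.2.2.2.2 != 0] ->
  fsum (fun a => fsum (fun b => fsum (fun c => fsum (fun d => fsum (fun e =>
     fsum (fun f => F a b c d e f)))))) =
  fsum (fun t : T1 * (T2 * (T3 * (T4 * (T5 * T6)))) =>
     F t.1 t.2.1 t.2.2.1 t.2.2.2.1 t.2.2.2.2.1 t.2.2.2.2.2).
Proof.
move=> fS.
transitivity (fsum (fun a => fsum (fun b => fsum (fun c => fsum (fun d =>
   fsum (fun u : T5 * T6 => F a b c d u.1 u.2)))))).
  apply: fsum_ext => a; apply: fsum_ext => b; apply: fsum_ext => c; apply: fsum_ext => d.
  apply: (fsum_pair (F a b c d)).
  by apply: (@finite_sec _ _ (fun u : T5 * T6 => (a, (b, (c, (d, u))))) _ _ fS) => u v [].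
transitivity (fsum (fun a => fsum (fun b => fsum (fun c =>
   fsum (fun u : T4 * (T5 * T6) => F a b c u.1 u.2.1 u.2.2))))).
  apply: fsum_ext => a; apply: fsum_ext => b; apply: fsum_ext => c.
  apply: (fsum_pair (fun d (u : T5 * T6) => F a b c d u.1 u.2)).
  by apply: (@finite_sec _ _ (fun u : T4 * (T5 * T6) => (a, (b, (c, u)))) _ _ fS) => u v [].
transitivity (fsum (fun a => fsum (fun b =>
   fsum (fun u : T3 * (T4 * (T5 * T6)) => F a b u.1 u.2.1 u.2.2.1 u.2.2.2)))).
  apply: fsum_ext => a; apply: fsum_ext => b.
  apply: (fsum_pair (fun c (u : T4 * (T5 * T6)) => F a b c u.1 u.2.1 u.2.2)).
  by apply: (@finite_sec _ _ (fun u : T3 * (T4 * (T5 * T6)) => (a, (b, u))) _ _ fS) => u v [].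
transitivity (fsum (fun a =>
   fsum (fun u : T2 * (T3 * (T4 * (T5 * T6))) => F a u.1 u.2.1 u.2.2.1 u.2.2.2.1 u.2.2.2.2))).
  apply: fsum_ext => a.
  apply: (fsum_pair (fun b (u : T3 * (T4 * (T5 * T6))) => F a b u.1 u.2.1 u.2.2.1 u.2.2.2)).
  by apply: (@finite_sec _ _ (fun u : T2 * (T3 * (T4 * (T5 * T6))) => (a, u)) _ _ fS) => u v [].
exact: (fsum_pair (fun a (u : T2 * (T3 * (T4 * (T5 * T6)))) => F a u.1 u.2.1 u.2.2.1 u.2.2.2.1 u.2.2.2.2)).
Qed.

Lemma fsumZ {T : choiceType} (c : C) (f : T -> C) :
  fsum (fun t => c * f t) = c * fsum f.
Proof. by rewrite /fsum mulr_fsumr. Qed.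
Lemma fsumZr {T : choiceType} (c : C) (f : T -> C) :
  fsum (fun t => f t * c) = fsum f * c.
Proof. by rewrite /fsum mulr_fsuml. Qed.
Lemma fsum_reindex {T U : choiceType} (h : T -> U) (f : U -> C) :
  bijective h -> fsum f = fsum (fun t => f (h t)).
Proof. by move=> hb; rewrite /fsum (reindex_fsbigT h). Qed.

Definition gapp {X Y : choiceType} (K : X -> Y -> int -> int -> C)
  (s : Y -> int -> int -> C) : X -> int -> int -> C :=
  fun p m n => fsum (fun r => fsum (fun n1 : int => fsum (fun m1 : int =>
      K p r m1 n1 * s r (m - m1) (n - n1)))).
Definition gcomp {X Y W : choiceType} (A : X -> Y -> int -> int -> C)
  (B : Y -> W -> int -> int -> C) : X -> W -> int -> int -> C :=
  fun p r m n => gapp A (fun q => B q r) p m n.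

Definition G6 {X Y W : choiceType} (A : X -> Y -> int -> int -> C)
  (B : Y -> W -> int -> int -> C) (s : W -> int -> int -> C) p m n
  (q : Y) (n1 m1 : int) (r : W) (n2 m2 : int) : C :=
  A p q m1 n1 * (B q r m2 n2 * s r (m - m1 - m2) (n - n1 - n2)).

Definition fin6 {X Y W : choiceType} (A : X -> Y -> int -> int -> C)
  (B : Y -> W -> int -> int -> C) (s : W -> int -> int -> C) p m n :=
  finite_set [set t : Y * (int * (int * (W * (int * int)))) |
     G6 A B s p m n t.1 t.2.1 t.2.2.1 t.2.2.2.1 t.2.2.2.2.1 t.2.2.2.2.2 != 0].

Lemma gapp_assoc {X Y W : choiceType} (A : X -> Y -> int -> int -> C)
  (B : Y -> W -> int -> int -> C) (s : W -> int -> int -> C) p m n :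
  fin6 A B s p m n ->
  gapp A (gapp B s) p m n = gapp (gcomp A B) s p m n.
Proof.
move=> fS.
pose h (t : Y * (int * (int * (W * (int * int))))) : W * (int * (int * (Y * (int * int)))) :=
  (t.2.2.2.1, (t.2.1 + t.2.2.2.2.1, (t.2.2.1 + t.2.2.2.2.2, (t.1, (t.2.1, t.2.2.1))))).
pose hi (t : W * (int * (int * (Y * (int * int))))) : Y * (int * (int * (W * (int * int)))) :=
  (t.2.2.2.1, (t.2.2.2.2.1, (t.2.2.2.2.2, (t.1, (t.2.1 - t.2.2.2.2.1, t.2.2.1 - t.2.2.2.2.2))))).
have hK : cancel h hi.
  by case=> q [n1 [m1 [r [n2 m2]]]]; rewrite /h /hi /=; congr (_,(_,(_,(_,(_,_))))); ring.
have hiK : cancel hi h.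
  by case=> r [a [b [q [n1 m1]]]]; rewrite /h /hi /=; congr (_,(_,(_,(_,(_,_))))); ring.
pose H6 (r : W) (a b : int) (q : Y) (n1 m1 : int) : C :=
  A p q m1 n1 * B q r (b - m1) (a - n1) * s r (m - b) (n - a).
have HG t : H6 (h t).1 (h t).2.1 (h t).2.2.1 (h t).2.2.2.1 (h t).2.2.2.2.1 (h t).2.2.2.2.2
   = G6 A B s p m n t.1 t.2.1 t.2.2.1 t.2.2.2.1 t.2.2.2.2.1 t.2.2.2.2.2.
  case: t => q [n1 [m1 [r [n2 m2]]]]; rewrite /H6 /G6 /h /= -mulrA.
  congr (_ * (_ * _)); [congr B; ring | congr s; ring].
transitivity (fsum (fun t : Y * (int * (int * (W * (int * int)))) =>
     G6 A B s p m n t.1 t.2.1 t.2.2.1 t.2.2.2.1 t.2.2.2.2.1 t.2.2.2.2.2)).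
  rewrite -(flat6 (G6 A B s p m n)) //.
  rewrite /gapp; apply: fsum_ext => q; apply: fsum_ext => n1; apply: fsum_ext => m1.
  rewrite -fsumZ; apply: fsum_ext => r; rewrite -fsumZ; apply: fsum_ext => n2.
  rewrite -fsumZ; apply: fsum_ext => m2; rewrite /G6; congr (_ * (_ * s _ _ _)); ring.
transitivity (fsum (fun t : W * (int * (int * (Y * (int * int)))) =>
     H6 t.1 t.2.1 t.2.2.1 t.2.2.2.1 t.2.2.2.2.1 t.2.2.2.2.2)); last first.
  rewrite -(flat6 H6).
    rewrite /gapp /gcomp /gapp; apply: fsum_ext => r; apply: fsum_ext => a.
    apply: fsum_ext => b; rewrite -fsumZr; apply: fsum_ext => q.
    rewrite -fsumZr; apply: fsum_ext => n1; rewrite -fsumZr; apply: fsum_ext => m1.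
    by rewrite /H6.
  apply: (sub_finite_set _ (finite_image h fS)) => t Ht.
  exists (hi t); last by rewrite hiK.
  have E := HG (hi t); rewrite hiK in E.
  by rewrite /= -E.
rewrite (fsum_reindex h); last exact: (Bijective hK hiK).
by apply: fsum_ext => t; rewrite HG.
Qed.

Lemma fsum_delta {T : choiceType} (f : T -> C) (t0 : T) :
  (forall t, t != t0 -> f t = 0) -> fsum f = f t0.
Proof.
move=> h; rewrite /fsum (fsbigTE [fset t0]%fset) ?big_seq_fset1 //.
by move=> t; rewrite inE => /h.
Qed.

Lemma fsum_forced2 {A B : choiceType} (F : A -> C) (b0 : B) :
  fsum (fun t : A * B => if t.2 == b0 then F t.1 else 0) = fsum F.
Proof.
rewrite /fsum -(@fsbig_widen _ _ _ _ ((fun a => (a, b0)) @` [set: A]) [set: A * B]) //.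
  rewrite fsbig_image /=; first by apply: eq_fsbigr => a _; rewrite eqxx.
  by move=> x y _ _ [].
move=> [a b] [_ nI] /=; case: eqP => // e; exfalso; apply: nI; exists a => //.
by rewrite e.
Qed.

Lemma fsum_forced1 {A B : choiceType} (F : B -> C) (a0 : A) :
  fsum (fun t : A * B => if t.1 == a0 then F t.2 else 0) = fsum F.
Proof.
rewrite /fsum -(@fsbig_widen _ _ _ _ ((fun b => (a0, b)) @` [set: B]) [set: A * B]) //.
  rewrite fsbig_image /=; first by apply: eq_fsbigr => a _; rewrite eqxx.
  by move=> x y _ _ [].
move=> [a b] [_ nI] /=; case: eqP => // e; exfalso; apply: nI; exists b => //.
by rewrite e.
Qed.

Lemma fsum_neq0 {T : choiceType} (f : T -> C) : fsum f != 0 -> exists t, f t != 0.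
Proof.
move=> h; apply: contra_notP (negP h) => nh; apply/eqP; rewrite /fsum fsbig1 // => t _.
by apply/eqP; apply: contra_notT nh => ht; exists t.
Qed.

Lemma finmin {T : choiceType} (S : set T) (f : T -> int) :
  finite_set S -> exists L, forall t, S t -> L <= f t.
Proof.
move=> /finite_fsetP [X ->]; exists (- \sum_(t <- X) `|f t|) => t /= tX.
rewrite (big_rem t) //=.
have h1 : 0 <= \sum_(y <- rem t X) `|f y| by apply: sumr_ge0 => y _.
have h2 : - `|f t| <= f t by rewrite lerNl -normrN ler_norm.
by apply: le_trans h2; rewrite lerN2 lerDl.
Qed.

Section Fin.
Context {X Y W : choiceType}.
Implicit Types (A : X -> Y -> int -> int -> C) (B : Y -> W -> int -> int -> C)
  (s : W -> int -> int -> C).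

Definition mlbE {U V : choiceType} (K : U -> V -> int -> int -> C) :=
  forall p q n, exists M, forall m, m < M -> K p q m n = 0.
Definition nlbE {U V : choiceType} (K : U -> V -> int -> int -> C) :=
  forall p q, exists N, forall m n, n < N -> K p q m n = 0.
Definition colfinU {U V : choiceType} (K : U -> V -> int -> int -> C) :=
  forall r, finite_set [set q | exists m n, K q r m n != 0].
Definition colfinN {U V : choiceType} (K : U -> V -> int -> int -> C) :=
  forall r n, finite_set [set q | exists m, K q r m n != 0].
Definition nonneg {U V : choiceType} (K : U -> V -> int -> int -> C) :=
  forall p q m n, n < 0 -> K p q m n = 0.
Definition nlbC {U V : choiceType} (K : U -> V -> int -> int -> C) :=
  forall r, exists N, forall q m n, n < N -> K q r m n = 0.

Definition smlb {U : choiceType} (s : U -> int -> int -> C) :=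
  forall r b, exists M, forall a, a < M -> s r a b = 0.
Definition snlb {U : choiceType} (s : U -> int -> int -> C) :=
  forall r, exists N, forall a b, b < N -> s r a b = 0.
Definition sfinT {U : choiceType} (s : U -> int -> int -> C) :=
  finite_set [set r | exists a b, s r a b != 0].
Definition snlbU {U : choiceType} (s : U -> int -> int -> C) :=
  exists N, forall r a b, b < N -> s r a b = 0.
Definition sfinN {U : choiceType} (s : U -> int -> int -> C) :=
  forall b, finite_set [set r | exists a, s r a b != 0].

Lemma lb_of {N n : int} {c : C} : (n < N -> c = 0) -> c != 0 -> N <= n.
Proof. move=> h hc; case: (ltrP n N) => // /h e; by rewrite e eqxx in hc. Qed.

Definition Q4 A B s p (n : int) :=
  [set u : Y * (int * (W * int)) | exists m1 m2 a,
     A p u.1 m1 u.2.1 != 0 /\ B u.1 u.2.2.1 m2 u.2.2.2 != 0 /\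
     s u.2.2.1 a (n - u.2.1 - u.2.2.2) != 0].

Lemma fin6_of A B s p m n :
  mlbE A -> mlbE B -> smlb s -> finite_set (Q4 A B s p n) -> fin6 A B s p m n.
Proof.
move=> hA hB hs fQ.
have [MA hMA] := @choice _ _ (fun qn (M : int) => forall m1, m1 < M -> A p qn.1 m1 qn.2 = 0)
   (fun qn => hA p qn.1 qn.2).
have [MB hMB] := @choice _ _ (fun u (M : int) => forall m1, m1 < M -> B u.1 u.2.1 m1 u.2.2 = 0)
   (fun u => hB u.1 u.2.1 u.2.2).
have [Ms hMs] := @choice _ _ (fun u (M : int) => forall a, a < M -> s u.1 a u.2 = 0)
   (fun u => hs u.1 u.2).
pose box (u : Y * (int * (W * int))) : set (int * int) :=
  [set m1 : int | MA (u.1, u.2.1) <= m1 <= m - Ms (u.2.2.1, n - u.2.1 - u.2.2.2) - MB (u.1, (u.2.2.1, u.2.2.2))]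
  `*` [set m2 : int | MB (u.1, (u.2.2.1, u.2.2.2)) <= m2 <= m - Ms (u.2.2.1, n - u.2.1 - u.2.2.2) - MA (u.1, u.2.1)].
pose phi (v : (Y * (int * (W * int))) * (int * int)) : Y * (int * (int * (W * (int * int)))) :=
  (v.1.1, (v.1.2.1, (v.2.1, (v.1.2.2.1, (v.1.2.2.2, v.2.2))))).
have fin : finite_set (phi @` (Q4 A B s p n `*`` box)).
  apply: finite_image; apply: finite_setXR => // u _.
  by apply: finite_setX; exact: int_itv_fin.
apply: (sub_finite_set _ fin) => -[q [n1 [m1 [r [n2 m2]]]]] /=.
rewrite /G6 !mulf_eq0 !negb_or => /and3P[hA0 hB0 hs0].
exists ((q, (n1, (r, n2))), (m1, m2)) => //=.
have l1 := lb_of (hMA (q, n1) m1) hA0.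
have l2 := lb_of (hMB (q, (r, n2)) m2) hB0.
have l3 := lb_of (hMs (r, n - n1 - n2) (m - m1 - m2)) hs0.
split; first by exists m1, m2, (m - m1 - m2).
rewrite /box /=; split => /=; apply/andP; split.

- exact: l1.
- move: l1 l2 l3; set a := MA _; set b := MB _; set c := Ms _; move=> l1 l2 l3; lia.
- exact: l2.
- move: l1 l2 l3; set a := MA _; set b := MB _; set c := Ms _; move=> l1 l2 l3; lia.
Qed.

Lemma Q4_i A B s p n :
  nlbE A -> colfinU B -> nlbE B -> sfinT s -> snlb s -> finite_set (Q4 A B s p n).
Proof.
move=> hA cB hB fs hs.
have [NA hNA] := @choice _ _ (fun q (N : int) => forall m n, n < N -> A p q m n = 0)
   (fun q => hA p q).
have [NB hNB] := @choice _ _ (fun u (N : int) => forall m n, n < N -> B u.1 u.2 m n = 0)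
   (fun u => hB u.1 u.2).
have [Ns hNs] := @choice _ _ (fun r (N : int) => forall a b, b < N -> s r a b = 0) hs.
pose psi (v : W * (Y * (int * int))) : Y * (int * (W * int)) :=
  (v.2.1, (v.2.2.1, (v.1, v.2.2.2))).
pose T := [set r | exists a b, s r a b != 0] `*``
   (fun r => [set q | exists m n, B q r m n != 0] `*``
     (fun q => [set n1 : int | NA q <= n1 <= n - Ns r - NB (q, r)] `*`
               [set n2 : int | NB (q, r) <= n2 <= n - Ns r - NA q])).
have fT : finite_set (psi @` T).
  apply: finite_image; apply: finite_setXR => // r _.
  apply: finite_setXR => // q _; apply: finite_setX; exact: int_itv_fin.
apply: (sub_finite_set _ fT) => -[q [n1 [r n2]]] /= [m1 [m2 [a [hA0 [hB0 hs0]]]]].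
exists (r, (q, (n1, n2))) => //.
have l1 := lb_of (hNA q m1 n1) hA0.
have l2 := lb_of (hNB (q, r) m2 n2) hB0.
have l3 := lb_of (hNs r a (n - n1 - n2)) hs0.
split; first by exists a, (n - n1 - n2).
split; first by exists m2, n2.
move: l1 l2 l3; set x := NA _; set y := NB _; set z := Ns _ => l1 l2 l3.
by split => /=; apply/andP; split; lia.
Qed.

Lemma Q4_ii A B s p n :
  nonneg A -> nonneg B -> colfinN B -> snlbU s -> sfinN s -> finite_set (Q4 A B s p n).
Proof.
move=> hA hB cB [Ns hNs] fs.
pose psi (v : int * (int * (W * Y))) : Y * (int * (W * int)) :=
  (v.2.2.2, (v.1, (v.2.2.1, v.2.1))).
pose T := [set n1 : int | 0 <= n1 <= n - Ns] `*``
   (fun n1 => [set n2 : int | 0 <= n2 <= n - Ns] `*``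
     (fun n2 => [set r | exists a, s r a (n - n1 - n2) != 0] `*``
        (fun r => [set q | exists m, B q r m n2 != 0]))).
have fT : finite_set (psi @` T).
  apply: finite_image; apply: finite_setXR; first exact: int_itv_fin.
  move=> n1 _; apply: finite_setXR; first exact: int_itv_fin.
  move=> n2 _; apply: finite_setXR => // r _.
apply: (sub_finite_set _ fT) => -[q [n1 [r n2]]] /= [m1 [m2 [a [hA0 [hB0 hs0]]]]].
exists (n1, (n2, (r, q))) => //.
have l1 := lb_of (hA p q m1 n1) hA0.
have l2 := lb_of (hB q r m2 n2) hB0.
have l3 := lb_of (hNs r a (n - n1 - n2)) hs0.
rewrite /T /=.
split; first by apply/andP; split; lia.
split; first by apply/andP; split; lia.
by split; [exists a | exists m2].
Qed.

Lemma Q4_iii A B s p n :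
  nonneg A -> nlbC B -> colfinN B -> sfinT s -> snlb s -> finite_set (Q4 A B s p n).
Proof.
move=> hA hB cB fs hs.
have [NB hNB] := @choice _ _ (fun r (N : int) => forall q m n, n < N -> B q r m n = 0) hB.
have [Ns hNs] := @choice _ _ (fun r (N : int) => forall a b, b < N -> s r a b = 0) hs.
pose psi (v : W * (int * (int * Y))) : Y * (int * (W * int)) :=
  (v.2.2.2, (v.2.1, (v.1, v.2.2.1))).
pose T := [set r | exists a b, s r a b != 0] `*``
   (fun r => [set n1 : int | 0 <= n1 <= n - Ns r - NB r] `*``
     (fun n1 => [set n2 : int | NB r <= n2 <= n - Ns r] `*``
        (fun n2 => [set q | exists m, B q r m n2 != 0]))).
have fT : finite_set (psi @` T).
  apply: finite_image; apply: finite_setXR => // r _.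
  apply: finite_setXR; first exact: int_itv_fin.
  move=> n1 _; apply: finite_setXR => //; exact: int_itv_fin.
apply: (sub_finite_set _ fT) => -[q [n1 [r n2]]] /= [m1 [m2 [a [hA0 [hB0 hs0]]]]].
exists (r, (n1, (n2, q))) => //.
have l1 := lb_of (hA p q m1 n1) hA0.
have l2 := lb_of (hNB r q m2 n2) hB0.
have l3 := lb_of (hNs r a (n - n1 - n2)) hs0.
split; first by exists a, (n - n1 - n2).
move: l1 l2 l3; set y := NB _; set z := Ns _ => l1 l2 l3.
rewrite /T /=.
split; first by apply/andP; split; lia.
split; first by apply/andP; split; lia.
by exists m2.
Qed.

Lemma gapp_nz {U V : choiceType} (K : U -> V -> int -> int -> C) (s : V -> int -> int -> C) p m n :
  gapp K s p m n != 0 -> exists r n1 m1, K p r m1 n1 != 0 /\ s r (m - m1) (n - n1) != 0.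
Proof.
move=> /fsum_neq0 [r /fsum_neq0 [n1 /fsum_neq0 [m1]]].
rewrite mulf_eq0 negb_or => /andP[h1 h2]; by exists r, n1, m1.
Qed.

Lemma L_snlb {U V : choiceType} (K : U -> V -> int -> int -> C) (s : V -> int -> int -> C) :
  nlbE K -> sfinT s -> snlb s -> snlb (gapp K s).
Proof.
move=> hK fs hs p.
have [Ns hNs] := @choice _ _ (fun r (N : int) => forall a b, b < N -> s r a b = 0) hs.
have [NK hNK] := @choice _ _ (fun r (N : int) => forall m n, n < N -> K p r m n = 0) (hK p).
have [L hL] := @finmin _ _ (fun r => NK r + Ns r) fs.
exists L => a b hb; apply/eqP; apply: contraT => /gapp_nz [r [n1 [m1 [h1 h2]]]].
have l1 := lb_of (hNK r m1 n1) h1; have l2 := lb_of (hNs r _ _) h2.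
have l3 : L <= NK r + Ns r by apply: hL; exists (a - m1), (b - n1).
move: l1 l2 l3 hb; set x := NK r; set y := Ns r => *; lia.
Qed.

Lemma L_smlb {U V : choiceType} (K : U -> V -> int -> int -> C) (s : V -> int -> int -> C) :
  nlbE K -> mlbE K -> sfinT s -> snlb s -> smlb s -> smlb (gapp K s).
Proof.
move=> hK mK fs hs ms p n.
have [Ns hNs] := @choice _ _ (fun r (N : int) => forall a b, b < N -> s r a b = 0) hs.
have [NK hNK] := @choice _ _ (fun r (N : int) => forall m n, n < N -> K p r m n = 0) (hK p).
have [Ms hMs] := @choice _ _ (fun u (M : int) => forall a, a < M -> s u.1 a u.2 = 0)
   (fun u => ms u.1 u.2).
have [MK hMK] := @choice _ _ (fun u (M : int) => forall a, a < M -> K p u.1 a u.2 = 0)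
   (fun u => mK p u.1 u.2).
have fT : finite_set ([set r | exists a b, s r a b != 0] `*``
            (fun r => [set n1 : int | NK r <= n1 <= n - Ns r])).
  by apply: finite_setXR => // r _; exact: int_itv_fin.
have [L hL] := @finmin _ _ (fun u => MK u + Ms (u.1, n - u.2)) fT.
exists L => a ha; apply/eqP; apply: contraT => /gapp_nz [r [n1 [m1 [h1 h2]]]].
have l1 := lb_of (hNK r m1 n1) h1; have l2 := lb_of (hNs r _ _) h2.
have l4 := lb_of (hMK (r, n1) m1) h1; have l5 := lb_of (hMs (r, n - n1) _) h2.
have l3 : L <= MK (r, n1) + Ms (r, n - n1).
  apply: hL; split; first by exists (a - m1), (n - n1).
  move: l1 l2; set x := NK r; set y := Ns r => * /=; apply/andP; split; lia.
move: l3 l4 l5 ha; set x := MK _; set y := Ms _ => *; lia.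
Qed.

Lemma L_sfinT {U V : choiceType} (K : U -> V -> int -> int -> C) (s : V -> int -> int -> C) :
  colfinU K -> sfinT s -> sfinT (gapp K s).
Proof.
move=> cK fs.
have fB := bigcup_finite fs (fun r _ => cK r).
apply: (sub_finite_set _ fB) => p /= [a [b /gapp_nz [r [n1 [m1 [h1 h2]]]]]].
by exists r; [exists (a - m1), (b - n1) | exists m1, n1].
Qed.

Lemma L_snlbU {U V : choiceType} (K : U -> V -> int -> int -> C) (s : V -> int -> int -> C) :
  nlbC K -> sfinT s -> snlb s -> snlbU (gapp K s).
Proof.
move=> hK fs hs.
have [Ns hNs] := @choice _ _ (fun r (N : int) => forall a b, b < N -> s r a b = 0) hs.
have [NK hNK] := @choice _ _ (fun r (N : int) => forall q m n, n < N -> K q r m n = 0) hK.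
have [L hL] := @finmin _ _ (fun r => NK r + Ns r) fs.
exists L => p a b hb; apply/eqP; apply: contraT => /gapp_nz [r [n1 [m1 [h1 h2]]]].
have l1 := lb_of (hNK r p m1 n1) h1; have l2 := lb_of (hNs r _ _) h2.
have l3 : L <= NK r + Ns r by apply: hL; exists (a - m1), (b - n1).
move: l1 l2 l3 hb; set x := NK r; set y := Ns r => *; lia.
Qed.

Lemma L_sfinN {U V : choiceType} (K : U -> V -> int -> int -> C) (s : V -> int -> int -> C) :
  nlbC K -> colfinN K -> sfinT s -> snlb s -> sfinN (gapp K s).
Proof.
move=> hK cK fs hs n.
have [Ns hNs] := @choice _ _ (fun r (N : int) => forall a b, b < N -> s r a b = 0) hs.
have [NK hNK] := @choice _ _ (fun r (N : int) => forall q m n, n < N -> K q r m n = 0) hK.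
have fT : finite_set ([set r | exists a b, s r a b != 0] `*``
            (fun r => [set n1 : int | NK r <= n1 <= n - Ns r])).
  by apply: finite_setXR => // r _; exact: int_itv_fin.
have fB := bigcup_finite fT (fun u _ => cK u.1 u.2).
apply: (sub_finite_set _ fB) => p /= [a /gapp_nz [r [n1 [m1 [h1 h2]]]]].
have l1 := lb_of (hNK r p m1 n1) h1; have l2 := lb_of (hNs r _ _) h2.
exists (r, n1); last by exists m1.
split; first by exists (a - m1), (n - n1).
move: l1 l2; set x := NK r; set y := Ns r => * /=; apply/andP; split; lia.
Qed.

End Fin.

Lemma fsum0 {T : choiceType} (f : T -> C) : (forall t, f t = 0) -> fsum f = 0.
Proof. by move=> h; rewrite /fsum fsbig1 // => t _; rewrite h. Qed.

Definition dcstg {U : choiceType} (w : U -> C) : U -> int -> int -> C :=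
  fun p m n => if (m == 0) && (n == 0) then w p else 0.
Definition ebas {U : choiceType} (r : U) : U -> C := fun r' => if r' == r then 1 else 0.
Definition idk {U : choiceType} : U -> U -> int -> int -> C :=
  fun p q m n => if (p == q) && (m == 0) && (n == 0) then 1 else 0.

Lemma gapp_col {U V : choiceType} (K : U -> V -> int -> int -> C) r :
  gapp K (dcstg (ebas r)) = fun q a b => K q r a b.
Proof.
apply: funext => q; apply: funext => a; apply: funext => b.
rewrite /gapp (fsum_delta _ r).
  rewrite (fsum_delta _ b).
    rewrite (fsum_delta _ a); first by rewrite /dcstg /ebas !subrr eqxx mulr1.
    move=> m1 h; rewrite /dcstg.
    have -> : (a - m1 == 0) = false by rewrite subr_eq0 eq_sym; exact: negbTE h.
    by rewrite mulr0.
  move=> n1 h; apply: fsum0 => m1; rewrite /dcstg.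
  have -> : (b - n1 == 0) = false by rewrite subr_eq0 eq_sym; exact: negbTE h.
  by rewrite andbF mulr0.
move=> r' h; apply: fsum0 => n1; apply: fsum0 => m1.
by rewrite /dcstg /ebas (negbTE h); case: ifP; rewrite mulr0.
Qed.

Lemma gapp_id {U : choiceType} (s : U -> int -> int -> C) : gapp idk s = s.
Proof.
apply: funext => p; apply: funext => m; apply: funext => n.
rewrite /gapp (fsum_delta _ p).
  rewrite (fsum_delta _ 0).
    rewrite (fsum_delta _ 0); first by rewrite /idk !eqxx mul1r !subr0.
    by move=> m1 h; rewrite /idk (negbTE h) andbF mul0r.
  move=> n1 h; apply: fsum0 => m1; by rewrite /idk (negbTE h) andbF mul0r.
move=> r' h; apply: fsum0 => n1; apply: fsum0 => m1.
by rewrite /idk eq_sym (negbTE h) mul0r.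
Qed.

Definition LU {U : choiceType} (X Y : U -> U -> int -> C) :=
  forall p r k, fsum (fun q => fsum (fun m => X p q m * Y q r (k - m)))
              = if (p == r) && (k == 0) then 1 else 0.

Definition SK {U : choiceType} (X : U -> U -> int -> C) : U -> U -> int -> int -> C :=
  fun p q m n => if n == 0 then X p q m else 0.

Lemma KI1 {U : choiceType} (X Y : U -> U -> int -> C) :
  LU X Y -> gcomp (SK X) (SK Y) = idk.
Proof.
move=> hU; apply: funext => p; apply: funext => r; apply: funext => m; apply: funext => n.
rewrite /gcomp /gapp.
transitivity (fsum (fun q => fsum (fun m1 =>
   X p q m1 * (if n == 0 then Y q r (m - m1) else 0)))).
  apply: fsum_ext => q; rewrite (fsum_delta _ 0).
    by apply: fsum_ext => m1; rewrite /SK eqxx subr0.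
  by move=> n1 h; apply: fsum0 => m1; rewrite /SK (negbTE h) mul0r.
case: eqP => [->|hn].
  rewrite hU /idk; by case: (p == r); case: (m == 0).
rewrite /idk; have -> : (n == 0) = false by apply/eqP.
rewrite andbF; apply: fsum0 => q; apply: fsum0 => m1; by rewrite mulr0.
Qed.

Section Conc.
Context (I : choiceType).
Local Notation I2 := (I * I)%type.
Local Notation I3 := ((I * I) * I)%type.

Definition j3 (t : I * (I * I)) : I3 := ((t.1, t.2.1), t.2.2).
Definition j3i (q : I3) : I * (I * I) := (q.1.1, (q.1.2, q.2)).
Lemma j3_bij : bijective j3.
Proof. by exists j3i => [[x [y z]] | [[x y] z]]. Qed.

Lemma KI2 (X Y : I2 -> I2 -> int -> C) :
  LU X Y -> gcomp (S23_x X) (S23_x Y) = idk.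
Proof.
move=> hU; apply: funext => -[[a b] c]; apply: funext => -[[a' b'] c'].
apply: funext => m; apply: funext => n.
rewrite /gcomp /gapp (fsum_reindex j3 _ j3_bij).
pose G q' := fsum (fun m1 => X (b, c) q' m1 * Y q' (b', c') (m - m1)).
transitivity (fsum (fun t : I * (I * I) =>
   if t.1 == a then (if (n == 0) && (a == a') then G t.2 else 0) else 0)).
  apply: fsum_ext => -[x [y z]] /=; rewrite (fsum_delta _ 0); last first.
    by move=> n1 h; apply: fsum0 => m1; rewrite /S23_x /= (negbTE h) mul0r.
  rewrite /S23_x /= subr0.
  case: (eqVneq a x) => [<-|hx]; last first.
    by apply: fsum0 => m1; rewrite mul0r.
  case: ((n == 0) && (a == a')) => //.
  by apply: fsum0 => m1; rewrite mulr0.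
rewrite (fsum_forced1 (fun q' => if (n == 0) && (a == a') then G q' else 0) a) /idk.
case: (eqVneq n 0) => hn /=; last first.
  by rewrite andbF; apply: fsum0.
case: (eqVneq a a') => ha /=; last first.
  rewrite (_ : (((a, b), c) == ((a', b'), c')) = false); last by apply/negbTE/eqP => -[e _ _]; rewrite e eqxx in ha.
  by apply: fsum0.
rewrite /G hU ha andbT.
by rewrite !xpair_eqE eqxx.

Qed.

End Conc.

Lemma fact_neq0 (k : nat) : (k`!)%:R != 0 :> C.
Proof. by rewrite pnatr_eq0 -lt0n fact_gt0. Qed.

Lemma ibin0 (a : int) : ibin a 0 = 1.
Proof. by rewrite /ibin big_ord0 fact0 divr1. Qed.

Lemma ibin0S (k : nat) : ibin 0 k.+1 = 0.
Proof. by rewrite /ibin big_ord_recl /= subr0 mul0r mul0r. Qed.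

Lemma ibinS (a : int) (k : nat) : ibin (a + 1) k.+1 = ibin a k.+1 + ibin a k.
Proof.
rewrite /ibin big_ord_recl big_ord_recr /=.
have -> : \prod_(i < k) ((a + 1 - (bump 0 i)%:Z)%:~R : C) = \prod_(i < k) (a - i%:Z)%:~R.
  apply: eq_bigr => i _; congr intmul; rewrite /bump /= ?add1n; lia.
set P := \prod_(i < k) _.
rewrite factS natrM.
have h1 := fact_neq0 k.
have h2 : (k.+1)%:R != 0 :> C by rewrite pnatr_eq0.
rewrite !rmorphB /= !rmorphD /=.
rewrite ?rmorph0 ?rmorph1 ?intr1 subr0 -!pmulrn.
have e : ((k.+1)%:R : C) = k%:R + 1 by rewrite -natr1.
rewrite e in h2 *.
field; by apply/andP.
Qed.

Definition Vs (a b : int) (N : nat) : C := \sum_(j < N.+1) ibin a j * ibin b (N - j).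

Lemma VsS a b M : Vs (a + 1) b M.+1 = Vs a b M.+1 + Vs a b M.
Proof.
rewrite /Vs big_ord_recl [in X in _ = X + _]big_ord_recl !ibin0 !mul1r subn0.
have -> : \sum_(i < M.+1) ibin (a + 1) (bump 0 i) * ibin b (M.+1 - bump 0 i)
   = \sum_(i < M.+1) ibin a i.+1 * ibin b (M - i) + \sum_(i < M.+1) ibin a i * ibin b (M - i).
  rewrite -big_split /=; apply: eq_bigr => i _.
  by rewrite /bump /= ?add1n subSS ibinS mulrDl.
have -> : \sum_(i < M.+1) ibin a (bump 0 i) * ibin b (M.+1 - bump 0 i)
   = \sum_(i < M.+1) ibin a i.+1 * ibin b (M - i).
  by apply: eq_bigr => i _; rewrite /bump /= ?add1n subSS.
by rewrite addrA.
Qed.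

Lemma Vs0 a b : Vs a b 0 = 1.
Proof. by rewrite /Vs big_ord_recl big_ord0 !ibin0 mul1r addr0. Qed.

Lemma Vand a b N : Vs a b N = ibin (a + b) N.
Proof.
have base : forall N, Vs 0 b N = ibin (0 + b) N.
  move=> N'; rewrite /Vs big_ord_recl ibin0 mul1r subn0 add0r big1 ?addr0 //.
  by move=> i _; rewrite /bump /= ?add1n ibin0S mul0r.
have up : forall a, (forall N, Vs a b N = ibin (a + b) N) ->
   forall N, Vs (a + 1) b N = ibin (a + 1 + b) N.
  move=> a' IH [|M]; first by rewrite Vs0 ibin0.
  by rewrite VsS !IH (addrC a' 1) -addrA (addrC 1) ibinS.
have down : forall a, (forall N, Vs (a + 1) b N = ibin (a + 1 + b) N) ->
   forall N, Vs a b N = ibin (a + b) N.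
  move=> a' IH; elim=> [|M IHM]; first by rewrite Vs0 ibin0.
  have := VsS a' b M; rewrite IH IHM (addrC a' 1) -addrA (addrC 1) ibinS => e.
  by apply: (addIr (ibin (a' + b) M)); rewrite -e.
have pos : forall n : nat, forall N, Vs n%:Z b N = ibin (n%:Z + b) N.
  elim=> [|n IH]; first exact: base.
  by rewrite -addn1 PoszD; apply: up.
have neg : forall n : nat, forall N, Vs (- n%:Z) b N = ibin (- n%:Z + b) N.
  elim=> [|n IH]; first by rewrite oppr0; exact: base.
  apply: down; rewrite -addn1 PoszD opprD -addrA addNr addr0; exact: IH.
case: a => n; first exact: pos.
by rewrite NegzE; apply: neg.
Qed.

Lemma fsum_int_range (N : nat) (f : int -> C) :
  (forall n1, (n1 < 0) || (N%:Z < n1) -> f n1 = 0) ->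
  fsum f = \sum_(j < N.+1) f j%:Z.
Proof.
move=> h; rewrite /fsum (fsbigTE [fset (nat_of_ord j)%:Z | j in 'I_N.+1]%fset).
  rewrite big_imfset /=; last by move=> i j _ _ /= [] /val_inj.
  rewrite big_enum /=. by [].
move=> n1 hn; apply: h; apply: contraT; rewrite negb_or -!leNgt => /andP[h1 h2].
move/negP: hn => hn; exfalso; apply: hn; apply/imfsetP.
have hlt : (absz n1 < N.+1)%N by lia.
exists (Ordinal hlt) => //=; lia.
Qed.

Lemma fsum_exchange {A B : choiceType} (F : A -> B -> C) :
  finite_set [set t : A * B | F t.1 t.2 != 0] ->
  fsum (fun a => fsum (fun b => F a b)) = fsum (fun b => fsum (fun a => F a b)).
Proof.
move=> fS; rewrite fsum_pair // fsum_pair.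
  rewrite (fsum_reindex (fun t : B * A => (t.2, t.1))) //.
  by exists (fun t : A * B => (t.2, t.1)) => -[].
apply: (sub_finite_set _ (finite_image (fun t : A * B => (t.2, t.1)) fS)) => -[b a] /= h.
by exists (a, b).
Qed.

Lemma VC (k K : int) (n : int) :
  fsum (fun n1 : int => if (0 <= n1) && (0 <= n - n1)
     then ibin k `|n1| * ibin (K - k) `|n - n1| else 0)
  = if 0 <= n then ibin K `|n| else 0.
Proof.
case: (ltrP n 0) => hn.
  apply: fsum0 => n1; case: ifP => // /andP[h1 h2]; lia.
have [N ->] : exists N : nat, n = N%:Z by exists (absz n); lia.
rewrite (fsum_int_range N); last first.
  by move=> n1 /orP[h|h]; case: ifP => // /andP[h1 h2]; lia.
transitivity (Vs k (K - k) N); last by rewrite Vand addrC subrK.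
apply: eq_bigr => j _.
have hj : (j <= N)%N by rewrite -ltnS.
rewrite ifT; last by apply/andP; split; lia.
have -> : `|(N%:Z - j%:Z)|%N = (N - j)%N by lia.
by [].
Qed.

Lemma stepB (x yv : int -> C) (m n : int) :
  (exists N, forall k, k < N -> x k = 0) ->
  (exists N, forall k, k < N -> yv k = 0) ->
  fsum (fun n1 : int => fsum (fun m1 : int =>
    (if 0 <= n1 then ibin (m1 + n1) `|n1| * x (m1 + n1) else 0) *
    (if 0 <= n - n1 then ibin (m - m1 + (n - n1)) `|n - n1| * yv (m - m1 + (n - n1)) else 0)))
  = (if 0 <= n then ibin (m + n) `|n| else 0) * fsum (fun k => x k * yv (m + n - k)).
Proof.
move=> [Nx hx] [Ny hy].
transitivity (fsum (fun n1 : int => fsum (fun k : int =>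
   (if (0 <= n1) && (0 <= n - n1) then ibin k `|n1| * ibin (m + n - k) `|n - n1| else 0)
   * (x k * yv (m + n - k))))).
  apply: fsum_ext => n1.
  rewrite (fsum_reindex (fun k => k - n1)); last first.
    by exists (fun k => k + n1) => k /=; rewrite ?subrK ?addrK.
  apply: fsum_ext => k.
  have e1 : k - n1 + n1 = k by rewrite subrK.
  have e2 : m - (k - n1) + (n - n1) = m + n - k by ring.
  rewrite e1 e2; case: (0 <= n1); case: (0 <= n - n1) => /=; ring.
rewrite fsum_exchange; last first.
  apply: (sub_finite_set _ (finite_setX (int_itv_fin 0 n) (int_itv_fin Nx (m + n - Ny)))).
  move=> [n1 k] /=; case: ifP => [/andP[h1 h2]|]; last by rewrite mul0r eqxx.
  rewrite !mulf_eq0 !negb_or => /andP[_ /andP[hxk hyk]].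
  have l1 : Nx <= k by case: (ltrP k Nx) => // /hx e; rewrite e eqxx in hxk.
  have l2 : Ny <= m + n - k by case: (ltrP (m + n - k) Ny) => // /hy e; rewrite e eqxx in hyk.
  split; apply/andP; split; lia.
rewrite -fsumZ; apply: fsum_ext => k.
by rewrite fsumZr VC.
Qed.

Section Conc3.
Context (I : choiceType).
Local Notation I2 := (I * I)%type.
Local Notation I3 := ((I * I) * I)%type.

Definition k3 (t : I2 * I) : I3 := ((t.1.1, t.2), t.1.2).
Definition k3i (q : I3) : I2 * I := ((q.1.1, q.2), q.1.2).
Lemma k3_bij : bijective k3.
Proof. by exists k3i => [[[x z] y] | [[x y] z]]. Qed.

Definition elb (X : I2 -> I2 -> int -> C) :=
  forall p q, exists N, forall n, n < N -> X p q n = 0.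

Lemma KI3 (X Y : I2 -> I2 -> int -> C) :
  elb X -> elb Y -> LU X Y -> gcomp (S13_xpz X) (S13_xpz Y) = idk.
Proof.
move=> lX lY hU; apply: funext => -[[a b] c]; apply: funext => -[[a' b'] c'].
apply: funext => m; apply: funext => n.
rewrite /gcomp /gapp (fsum_reindex k3 _ k3_bij).
pose H q' := fsum (fun n1 : int => fsum (fun m1 : int =>
    (if 0 <= n1 then ibin (m1 + n1) `|n1| * X (a, c) q' (m1 + n1) else 0) *
    (if 0 <= n - n1 then ibin (m - m1 + (n - n1)) `|n - n1| * Y q' (a', c') (m - m1 + (n - n1)) else 0))).
transitivity (fsum (fun t : I2 * I => if t.2 == b then (if b == b' then H t.1 else 0) else 0)).
  apply: fsum_ext => -[[x z] y] /=; rewrite /S13_xpz /=.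
  case: (eqVneq b y) => [<-|hy]; last first.
    by apply: fsum0 => n1; apply: fsum0 => m1; rewrite andbF mul0r.
  case: (eqVneq b b') => [e|hb]; last first.
    by apply: fsum0 => n1; apply: fsum0 => m1; rewrite andbF mulr0.
  subst b'; by apply: fsum_ext => n1; apply: fsum_ext => m1; rewrite !andbT.
rewrite (fsum_forced2 (fun q' => if b == b' then H q' else 0) b).
have HB q' : H q' = (if 0 <= n then ibin (m + n) `|n| else 0) *
     fsum (fun k => X (a, c) q' k * Y q' (a', c') (m + n - k)).
  by rewrite /H; apply: stepB; [exact: lX | exact: lY].
case: (eqVneq b b') => [<-|hb]; last first.
  rewrite /idk; have -> : (((a, b), c) == ((a', b'), c')) = false.
    by apply/negbTE; apply: contra hb => /eqP [_ -> _].
  by apply: fsum0.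
transitivity ((if 0 <= n then ibin (m + n) `|n| else 0) *
   fsum (fun q' => fsum (fun k => X (a, c) q' k * Y q' (a', c') (m + n - k)))).
  by rewrite -fsumZ; apply: fsum_ext => q'; rewrite ?eqxx HB.
rewrite hU /idk.
have -> : (((a, b), c) == ((a', b), c')) = ((a, c) == (a', c')).
  by rewrite !xpair_eqE eqxx andbT.
case: ((a, c) == (a', c')); last by rewrite /= !mulr0.
rewrite /=; case: (eqVneq n 0) => [->|hn].
  by rewrite addr0 lexx ibin0 mul1r andbT.
rewrite andbF; case: (eqVneq (m + n) 0) => [e|e]; last by rewrite mulr0.
case: ifP => h; last by rewrite mul0r.
rewrite e; have [k ->] : exists k : nat, `|n|%N = k.+1 by exists (`|n|.-1)%N; lia.
by rewrite ibin0S mul0r.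
Qed.
End Conc3.

Section Assoc.
Context {X Y W : choiceType}.
Variables (A : X -> Y -> int -> int -> C) (B : Y -> W -> int -> int -> C)
  (s : W -> int -> int -> C).

Lemma assoc_i : nlbE A -> mlbE A -> colfinU B -> nlbE B -> mlbE B ->
  sfinT s -> snlb s -> smlb s -> gapp A (gapp B s) = gapp (gcomp A B) s.
Proof.
move=> a1 a2 b1 b2 b3 s1 s2 s3; apply: funext => p; apply: funext => m; apply: funext => n.
by apply: gapp_assoc; apply: fin6_of => //; apply: Q4_i.
Qed.

Lemma assoc_ii : nonneg A -> mlbE A -> nonneg B -> colfinN B -> mlbE B ->
  snlbU s -> sfinN s -> smlb s -> gapp A (gapp B s) = gapp (gcomp A B) s.
Proof.
move=> a1 a2 b1 b2 b3 s1 s2 s3; apply: funext => p; apply: funext => m; apply: funext => n.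
by apply: gapp_assoc; apply: fin6_of => //; apply: Q4_ii.
Qed.

Lemma assoc_iii : nonneg A -> mlbE A -> nlbC B -> colfinN B -> mlbE B ->
  sfinT s -> snlb s -> smlb s -> gapp A (gapp B s) = gapp (gcomp A B) s.
Proof.
move=> a1 a2 b1 b2 b3 s1 s2 s3; apply: funext => p; apply: funext => m; apply: funext => n.
by apply: gapp_assoc; apply: fin6_of => //; apply: Q4_iii.
Qed.

Lemma K_nlbE : nlbE A -> colfinU B -> nlbE B -> nlbE (gcomp A B).
Proof. move=> a1 b1 b2 p r; exact: (L_snlb A (fun q => B q r) a1 (b1 r) (fun q => b2 q r) p). Qed.

Lemma K_mlbE : nlbE A -> mlbE A -> colfinU B -> nlbE B -> mlbE B -> mlbE (gcomp A B).
Proof.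
move=> a1 a2 b1 b2 b3 p r n.
exact: (L_smlb A (fun q => B q r) a1 a2 (b1 r) (fun q => b2 q r) (fun q => b3 q r) p n).
Qed.
End Assoc.

Lemma nlbC_E {U V : choiceType} (K : U -> V -> int -> int -> C) : nlbC K -> nlbE K.
Proof. move=> h p q; have [N hN] := h q; by exists N => m n /hN; apply. Qed.

Lemma dcst_props {U : choiceType} (w : U -> C) :
  fin_supp w -> sfinT (dcstg w) /\ snlb (dcstg w) /\ smlb (dcstg w).
Proof.
move=> fw; split; last split.
- apply: (sub_finite_set _ fw) => r [a [b]]; rewrite /dcstg; by case: ifP => //; rewrite eqxx.
- move=> r; exists 0 => a b hb; rewrite /dcstg.
  by rewrite (lt_eqF hb) andbF.
- move=> r b; exists 0 => a ha; rewrite /dcstg.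
  by rewrite (lt_eqF ha).
Qed.

Lemma ebas_fin {U : choiceType} (r : U) : fin_supp (ebas r).
Proof.
apply: (sub_finite_set _ (finite_set1 r)) => r' /=; rewrite /ebas.
have [->|ne] := eqVneq r' r; first by []. by rewrite eqxx.
Qed.

Section Core.
Context {U V : choiceType}.
Variables (YK : U -> V -> int -> int -> C) (SS TT : U -> U -> int -> int -> C)
  (A1 A2 B1 B2 : V -> V -> int -> int -> C).
Hypotheses (hY1 : nlbC YK) (hY2 : colfinN YK) (hY3 : mlbE YK).
Hypotheses (hS1 : nonneg SS) (hS2 : colfinN SS) (hS3 : mlbE SS)
           (hT1 : nonneg TT) (hT2 : colfinN TT) (hT3 : mlbE TT).
Definition Kgood (K : V -> V -> int -> int -> C) := [/\ colfinU K, nlbE K & mlbE K].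
Hypotheses (gA1 : Kgood A1) (gA2 : Kgood A2) (gB1 : Kgood B1) (gB2 : Kgood B2).
Hypotheses (iA1 : gcomp A1 B1 = idk) (iA2 : gcomp A2 B2 = idk) (iTS : gcomp TT SS = idk).
Hypothesis H : forall w, fin_supp w ->
  gapp SS (gapp YK (dcstg w)) = gapp YK (gapp A1 (gapp A2 (dcstg w))).

Definition Sgood (s : V -> int -> int -> C) := [/\ sfinT s, snlb s & smlb s].

Lemma Sgood_app K s : Kgood K -> Sgood s -> Sgood (gapp K s).
Proof.
move=> [k1 k2 k3] [s1 s2 s3]; split.
- exact: L_sfinT.
- exact: L_snlb.
- exact: L_smlb.
Qed.

Lemma core w : fin_supp w ->
  gapp TT (gapp YK (dcstg w)) = gapp YK (gapp B2 (gapp B1 (dcstg w))).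
Proof.
move=> fw.
have Y1 := nlbC_E YK hY1.
have gu0 : Sgood (dcstg w) by have [? [? ?]] := dcst_props w fw; split.
have gz := Sgood_app _ _ gB1 gu0.
have gv := Sgood_app _ _ gB2 gz.
set u0 := dcstg w in gu0 *; set z := gapp B1 u0 in gz *; set v := gapp B2 z in gv *.
case: gA1 => a11 a12 a13; case: gA2 => a21 a22 a23.
case: gB1 => b11 b12 b13; case: gB2 => b21 b22 b23.
have e1 : gapp A2 v = z.
  case: gz => z1 z2 z3.
  by rewrite /v assoc_i // iA2 gapp_id.
have e2 : gapp A1 z = u0.
  case: gu0 => z1 z2 z3.
  by rewrite /z assoc_i // iA1 gapp_id.
have KE : gcomp SS YK = gcomp (gcomp YK A1) A2.
  apply: funext => p; apply: funext => r; apply: funext => a; apply: funext => b.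
  have [c1 [c2 c3]] := dcst_props _ (ebas_fin r).
  have g2 : Sgood (gapp A2 (dcstg (ebas r))) by apply: Sgood_app => //; split.
  case: g2 => g21 g22 g23.
  rewrite /gcomp -[fun q => YK q r]gapp_col H; last exact: ebas_fin.
  rewrite assoc_i // assoc_i //; last exact: K_mlbE.
    by rewrite gapp_col.
  exact: K_nlbE.
have e3 : gapp SS (gapp YK v) = gapp YK u0.
  case: gv => v1 v2 v3.
  rewrite assoc_iii // KE -assoc_i //; last 2 first.
    exact: K_nlbE.
    exact: K_mlbE.
  rewrite e1.
  case: gz => z1 z2 z3.
  by rewrite -assoc_i // e2.
rewrite -e3.
case: gv => v1 v2 v3.
rewrite assoc_ii //; last first.
- exact: L_smlb.
- exact: L_sfinN.
- exact: L_snlbU.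
by rewrite iTS gapp_id.
Qed.
End Core.
Lemma sgn2 (k : int) : (-1 : C) ^ k * (-1) ^ k = 1.
Proof.
case: k => n /=.
  by rewrite -exprMn mulrNN mulr1 expr1n.
by rewrite -invrM ?unitrX ?unitrN ?unitr1 // -exprMn mulrNN mulr1 expr1n invr1.
Qed.
Lemma sgnN (k : int) : (-1 : C) ^ (- k) = (-1) ^ k.
Proof. by rewrite -exprz_inv invrN1. Qed.
Lemma sgnB (n m : int) : (-1 : C) ^ n * (-1) ^ (n - m) = (-1) ^ m.
Proof.
have h : (-1 : C) != 0 by rewrite oppr_eq0 oner_eq0.
by rewrite expfzDr // mulrA sgn2 mul1r sgnN.
Qed.
Lemma sgn1 (n : int) : (-1 : C) ^ (n + 1) = - (-1) ^ n.
Proof.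
have h : (-1 : C) != 0 by rewrite oppr_eq0 oner_eq0.
by rewrite expfzDr // expr1z mulrN1.
Qed.

Lemma fsumN {T : choiceType} (f : T -> C) :
  fsum (fun t => - f t) = - fsum f.
Proof.
rewrite -mulN1r -fsumZ; congr fsum; apply: funext => t; by rewrite mulN1r.
Qed.
Section S.
Context (I : choiceType).
Local Notation I2 := (I * I)%type.

Lemma flipK : cancel (@flip I) (@flip I). Proof. by case. Qed.
Lemma flip_bij : bijective (@flip I). Proof. exact: (Bijective flipK flipK). Qed.

Definition Rt (u : I2 -> int -> C) : I2 -> int -> C :=
  fun p n => (-1) ^ n * u (flip p) n.

Lemma RtK u : Rt (Rt u) = u.
Proof.
apply: funext => p; apply: funext => n.
by rewrite /Rt flipK mulrA sgn2 mul1r.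
Qed.

Lemma Rt_cst (w : I2 -> C) : Rt (cst w) = cst (fun p => w (flip p)).
Proof.
apply: funext => p; apply: funext => n.
rewrite /Rt /cst; case: eqP => [->|_]; by rewrite ?expr0z ?mul1r ?mulr0.
Qed.

Lemma lapp_Sinv (M : I2 -> I2 -> int -> C) u :
  lapp (Sinv M) u = Rt (lapp M (Rt u)).
Proof.
apply: funext => p; apply: funext => n.
rewrite /Rt /lapp -fsumZ [RHS](fsum_reindex (@flip I) _ flip_bij).
apply: fsum_ext => q; rewrite -fsumZ; apply: fsum_ext => m.
rewrite /Sinv /S21 flipK /=.
rewrite -(sgnB n m); ring.
Qed.

Lemma lappN (M : I2 -> I2 -> int -> C) u :
  lapp (fun p q n => - M p q n) u = fun p n => - lapp M u p n.
Proof.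
apply: funext => p; apply: funext => n; rewrite /lapp -fsumN.
apply: fsum_ext => q; rewrite -fsumN; apply: fsum_ext => m; by rewrite mulNr.
Qed.

Lemma fin_supp_flip (w : I2 -> C) : fin_supp w -> fin_supp (fun p => w (flip p)).
Proof.
move=> fw; rewrite /fin_supp.
have -> : [set t | w (flip t) != 0] = (@flip I) @` [set t | w t != 0].
  apply/seteqP; split => t /=.
    by move=> h; exists (flip t) => //; rewrite flipK.
  by case=> s /= h <-; rewrite flipK.
exact: finite_image.
Qed.

Lemma fin_supp_ten (u v : I -> C) : fin_supp u -> fin_supp v -> fin_supp (ten u v).
Proof.
move=> fu fv; apply: (sub_finite_set _ (finite_setX fu fv)).
move=> [a b] /=; rewrite /ten /= => h; split => /=; apply/negP => /eqP e;
  move: h; by rewrite e ?mul0r ?mulr0 eqxx.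
Qed.

Lemma key_a (sc : I2 -> I2 -> int -> C) (w : I2 -> C) :
  unitary sc -> fin_supp w ->
  lapp sc (cst (fun p => w (flip p))) = cst (fun p => w (flip p)) ->
  lapp sc (cst w) = cst w.
Proof.
move=> U fw h.
have := U w fw; rewrite lapp_Sinv Rt_cst h -Rt_cst RtK; exact.
Qed.

Lemma DR_Rt D u : DR D (Rt u) = Rt (DL D u).
Proof.
apply: funext => p; apply: funext => n; rewrite /DR /DL /Rt -fsumZ.
apply: fsum_ext => b /=; ring.
Qed.

Lemma Rt_DR D u : Rt (DR D u) = DL D (Rt u).
Proof.
apply: funext => p; apply: funext => n; rewrite /DR /DL /Rt -fsumZ.
apply: fsum_ext => b /=; ring.
Qed.

Lemma lder_Sinv (sc : I2 -> I2 -> int -> C) :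
  lder (Sinv sc) = Sinv (fun p q n => - lder sc p q n).
Proof.
apply: funext => p; apply: funext => q; apply: funext => n.
rewrite /lder /Sinv /S21 sgn1; ring.
Qed.

Lemma Rt_equiv (X Y Z : I2 -> int -> C) :
  (forall p n, X p n - Y p n = Z p n) <->
  (forall p n, Rt X p n - Rt Y p n = Rt Z p n).
Proof.
split => h p n; rewrite /Rt.
  by rewrite -mulrBr h.
have := h (flip p) n; rewrite /Rt flipK -mulrBr => e.
by rewrite -[LHS]mul1r -(sgn2 n) -mulrA e mulrA sgn2 mul1r.
Qed.

Lemma key_b (sc : I2 -> I2 -> int -> C) D (w : I2 -> C) :
  (forall p n,
      DL D (lapp sc (cst (fun p => w (flip p)))) p n
      - lapp sc (DL D (cst (fun p => w (flip p)))) p n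
      = - lapp (lder sc) (cst (fun p => w (flip p))) p n) <->
  (forall p n,
      DR D (lapp (Sinv sc) (cst w)) p n
        - lapp (Sinv sc) (DR D (cst w)) p n
      = lapp (lder (Sinv sc)) (cst w) p n).
Proof.
rewrite lder_Sinv !lapp_Sinv Rt_DR DR_Rt Rt_cst lappN.
exact: (Rt_equiv (DL D (lapp sc (cst (fun p => w (flip p)))))
   (lapp sc (DL D (cst (fun p => w (flip p)))))
   (fun p n => - lapp (lder sc) (cst (fun p => w (flip p))) p n)).
Qed.

End S.
Arguments elb {I}. Arguments KI2 {I}. Arguments KI3 {I}.

Section C.
Context (I : choiceType).
Local Notation I2 := (I * I)%type.
Local Notation I3 := ((I * I) * I)%type.

Definition YKy (y : I -> I -> int -> I -> C) : I2 -> I3 -> int -> int -> C :=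
  fun p r m n => if (m == 0) && (r.2 == p.2) then y r.1.1 r.1.2 n p.1 else 0.

Lemma Y1d_gapp y (u : I3 -> int -> int -> C) : Y1d y u = gapp (YKy y) u.
Proof.
apply: funext => p; apply: funext => m; apply: funext => n.
rewrite /gapp /Y1d.
rewrite -(fsum_forced2 (fun ab : I2 => fsum (fun k : int => y ab.1 ab.2 k p.1 * u (ab, p.2) m (n - k))) p.2).
apply: fsum_ext => -[ab c] /=.
case: (eqVneq c p.2) => [->|hc].
  apply: fsum_ext => n1; rewrite (fsum_delta _ 0).
    by rewrite /YKy /= eqxx subr0.
  by move=> m1 h; rewrite /YKy (negbTE h) mul0r.
symmetry; apply: fsum0 => n1; apply: fsum0 => m1.
by rewrite /YKy /= (negbTE hc) andbF mul0r.
Qed.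

Lemma Sser_gapp (X : I2 -> I2 -> int -> C) y (w : I3 -> C) :
  Sser X (Y1 y w) = gapp (SK X) (gapp (YKy y) (dcstg w)).
Proof.
rewrite -Y1d_gapp.
apply: funext => p; apply: funext => m; apply: funext => n.
rewrite /gapp /Sser; apply: fsum_ext => q.
rewrite (fsum_delta _ 0); last first.
  by move=> n1 h; apply: fsum0 => m1; rewrite /SK (negbTE h) mul0r.
rewrite (fsum_delta _ m); last first.
  move=> m1 h; rewrite /SK eqxx /Y1d; apply/eqP; rewrite mulf_eq0; apply/orP; right.
  apply/eqP; apply: fsum0 => ab; apply: fsum0 => k; rewrite /dcstg.
  have -> : (m - m1 == 0) = false by rewrite subr_eq0 eq_sym; exact: negbTE h.
  by rewrite mulr0.
rewrite /SK eqxx subrr subr0; congr (_ * _).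
rewrite /Y1d /Y1; apply: fsum_ext => ab.
rewrite (fsum_delta _ n); first by rewrite subrr /dcstg eqxx mulrC.
move=> k h; rewrite /dcstg.
have -> : (n - k == 0) = false by rewrite subr_eq0 eq_sym; exact: negbTE h.
by rewrite andbF mulr0.
Qed.

Lemma dapp_gapp (M : I3 -> I3 -> int -> int -> C) u : dapp M u = gapp M u.
Proof. by []. Qed.
Lemma dcst_dcstg (w : I3 -> C) : dcst w = dcstg w.
Proof. by []. Qed.

Definition colX (X : I2 -> I2 -> int -> C) :=
  forall q, finite_set [set p | exists n, X p q n != 0].

Lemma SK_props (X : I2 -> I2 -> int -> C) : colX X -> elb X ->
  [/\ nonneg (SK X), colfinN (SK X) & mlbE (SK X)].
Proof.
move=> cX lX; split.
- move=> p q m n hn; rewrite /SK; by rewrite (lt_eqF hn).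
- move=> r n; apply: (sub_finite_set _ (cX r)) => q /= [m]; rewrite /SK.
  by case: ifP => _; [exists m | rewrite eqxx].
- move=> p q n; have [N hN] := lX p q; exists N => m hm; rewrite /SK hN //.
  by case: ifP.
Qed.

Lemma S23_good (X : I2 -> I2 -> int -> C) : colX X -> elb X -> Kgood (S23_x X).
Proof.
move=> cX lX; split.
- move=> r; apply: (sub_finite_set _ (finite_image (fun u : I2 => ((r.1.1, u.1), u.2)) (cX (r.1.2, r.2)))).
  move=> [[a b] c] /= [m [n]]; rewrite /S23_x /=; case: ifP => [/andP[_ /eqP ->] h|]; last by rewrite eqxx.
  by exists (b, c) => //; exists m.
- move=> p q; exists 0 => m n hn; by rewrite /S23_x (lt_eqF hn).
- move=> p q n; have [N hN] := lX (p.1.2, p.2) (q.1.2, q.2); exists N => m hm.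
  rewrite /S23_x hN //; by case: ifP.
Qed.

Lemma S13_good (X : I2 -> I2 -> int -> C) : colX X -> elb X -> Kgood (S13_xpz X).
Proof.
move=> cX lX; split.
- move=> r; apply: (sub_finite_set _ (finite_image (fun u : I2 => ((u.1, r.1.2), u.2)) (cX (r.1.1, r.2)))).
  move=> [[a b] c] /= [m [n]]; rewrite /S13_xpz /=; case: ifP => [/andP[_ /eqP ->] h|]; last by rewrite eqxx.
  exists (a, c) => //; exists (m + n); apply: contra h => /eqP ->; by rewrite mulr0.
- move=> p q; exists 0 => m n hn; rewrite /S13_xpz.
  by have -> : (0 <= n) = false by apply/negbTE; rewrite -ltNge.
- move=> p q n; have [N hN] := lX (p.1.1, p.2) (q.1.1, q.2); exists (N - n) => m hm.
  rewrite /S13_xpz hN ?mulr0; first by case: ifP.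
  lia.
Qed.

Lemma YK_props (y : I -> I -> int -> I -> C) :
  (forall a b n, fin_supp (y a b n)) ->
  (forall a b, exists N : int, forall n, n < N -> forall i, y a b n i = 0) ->
  [/\ nlbC (YKy y), colfinN (YKy y) & mlbE (YKy y)].
Proof.
move=> fy ly; split.
- move=> r; have [N hN] := ly r.1.1 r.1.2; exists N => q m n hn.
  rewrite /YKy hN //; by case: ifP.
- move=> r n; apply: (sub_finite_set _ (finite_image (fun i => (i, r.2)) (fy r.1.1 r.1.2 n))).
  move=> [i c] /= [m]; rewrite /YKy /=; case: ifP => [/andP[_ /eqP ->] h|]; last by rewrite eqxx.
  by exists i.
- move=> p q n; exists 0 => m hm; by rewrite /YKy (lt_eqF hm).
Qed.

Lemma lapp_col (M : I2 -> I2 -> int -> C) r :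
  lapp M (cst (ebas r)) = fun q j => M q r j.
Proof.
apply: funext => q; apply: funext => j; rewrite /lapp (fsum_delta _ r).
  rewrite (fsum_delta _ j); first by rewrite /cst subrr eqxx /ebas eqxx mulr1.
  move=> m h; rewrite /cst.
  have -> : (j - m == 0) = false by rewrite subr_eq0 eq_sym; exact: negbTE h.
  by rewrite mulr0.
move=> q' h; apply: fsum0 => m; rewrite /cst /ebas (negbTE h).
by case: ifP; rewrite mulr0.
Qed.

Lemma LU_of (X Y : I2 -> I2 -> int -> C) :
  (forall w : I2 -> C, fin_supp w -> lapp X (lapp Y (cst w)) = cst w) -> LU X Y.
Proof.
move=> h p r k; have := h (ebas r) (ebas_fin r).
rewrite lapp_col => /(congr1 (fun f => f p k)).
rewrite {1}/lapp => ->; rewrite /cst /ebas.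
by case: (k == 0); case: (p == r); rewrite ?andbF.
Qed.

Lemma SinvK (sc : I2 -> I2 -> int -> C) : Sinv (Sinv sc) = sc.
Proof.
apply: funext => p; apply: funext => q; apply: funext => n.
by rewrite /Sinv /S21 !flipK mulrA sgn2 mul1r.
Qed.

Lemma unit_left (sc : I2 -> I2 -> int -> C) : unitary sc ->
  forall w, fin_supp w -> lapp (Sinv sc) (lapp sc (cst w)) = cst w.
Proof.
move=> U w fw.
rewrite -{2}(SinvK sc) lapp_Sinv (lapp_Sinv _ (Sinv sc)) RtK Rt_cst U ?Rt_cst.
  by congr cst; apply: funext => p; rewrite flipK.
exact: fin_supp_flip.
Qed.

Lemma colX_Sinv (sc : I2 -> I2 -> int -> C) : colX sc -> colX (Sinv sc).
Proof.
move=> cX q; apply: (sub_finite_set _ (finite_image (@flip I) (cX (flip q)))).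
move=> p /= [n h]; exists (flip p); last by rewrite flipK.
exists n; apply: contra h; rewrite /Sinv /S21 => /eqP ->; by rewrite mulr0.
Qed.

Lemma elb_Sinv (sc : I2 -> I2 -> int -> C) : elb sc -> elb (Sinv sc).
Proof.
move=> lX p q; have [N hN] := lX (flip p) (flip q); exists N => n hn.
by rewrite /Sinv /S21 hN // mulr0.
Qed.

Definition Q3 (p : I3) : I3 := ((p.1.2, p.2), p.1.1).
Definition Q3i (p : I3) : I3 := ((p.2, p.1.1), p.1.2).
Lemma Q3K : cancel Q3 Q3i. Proof. by case=> [[a b] c]. Qed.
Lemma Q3iK : cancel Q3i Q3. Proof. by case=> [[a b] c]. Qed.
Lemma Q3_bij : bijective Q3. Proof. exact: (Bijective Q3K Q3iK). Qed.

Lemma sgnC (a b : int) : (-1 : C) ^ a * (-1) ^ (b - a) = (-1) ^ b.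
Proof.
have h : (-1 : C) != 0 by rewrite oppr_eq0 oner_eq0.
by rewrite -expfzDr // addrC subrK.
Qed.

Definition Phi (u : I3 -> int -> int -> C) : I3 -> int -> int -> C :=
  fun q m n => (-1) ^ m * u (Q3i q) m n.

Lemma gapp_Phi (K K' : I3 -> I3 -> int -> int -> C) u :
  (forall p q m n, K' (Q3 p) (Q3 q) m n = (-1) ^ m * K p q m n) ->
  gapp K' (Phi u) = Phi (gapp K u).
Proof.
move=> hK'; apply: funext => p'; apply: funext => m; apply: funext => n.
rewrite /gapp /Phi (fsum_reindex Q3 _ Q3_bij) -fsumZ; apply: fsum_ext => r.
rewrite -fsumZ; apply: fsum_ext => n1; rewrite -fsumZ; apply: fsum_ext => m1.
rewrite -{1}(Q3iK p') hK' Q3K -(sgnC m1 m); ring.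
Qed.

Lemma dcst_Phi (w : I3 -> C) : dcstg (fun q => w (Q3i q)) = Phi (dcstg w).
Proof.
apply: funext => q; apply: funext => m; apply: funext => n.
rewrite /Phi /dcstg; case: eqP => [->|_] /=; by rewrite ?expr0z ?mul1r ?mulr0.
Qed.

Lemma S23_Phi (sc : I2 -> I2 -> int -> C) p q m n :
  S23_x (Sinv sc) (Q3 p) (Q3 q) m n = (-1) ^ m * S13_x sc p q m n.
Proof.
case: p => [[a b] c]; case: q => [[a' b'] c'].
rewrite /S23_x /S13_x /Q3 /Sinv /S21 /flip /=; case: ifP => _; by rewrite ?mulr0.
Qed.

Lemma S13_Phi (sc : I2 -> I2 -> int -> C) p q m n :
  S13_xpz (Sinv sc) (Q3 p) (Q3 q) m n = (-1) ^ m * S12_xmz sc p q m n.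
Proof.
case: p => [[a b] c]; case: q => [[a' b'] c'].
rewrite /S13_xpz /S12_xmz /Q3 /Sinv /S21 /flip /=; case: ifP => _; last by rewrite mulr0.
have h : (-1 : C) != 0 by rewrite oppr_eq0 oner_eq0.
rewrite expfzDr //; ring.
Qed.

Lemma Y1d_Phi y (u : I3 -> int -> int -> C) p m n :
  Y1d y (Phi u) p m n = (-1) ^ m * Y2d y u (flip p) m n.
Proof.
rewrite /Y1d /Y2d /Phi -fsumZ; apply: fsum_ext => ab.
rewrite -fsumZ; apply: fsum_ext => k; rewrite /Q3i /=; ring.
Qed.

Lemma Sser_Phi (sc : I2 -> I2 -> int -> C) y (w : I3 -> C) p m n :
  Sser (Sinv sc) (Y1 y (fun q => w (Q3i q))) p m n = (-1) ^ m * Sser sc (Y2 y w) (flip p) m n.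
Proof.
rewrite /Sser -fsumZ [RHS](fsum_reindex (@flip I) _ (flip_bij I)); apply: fsum_ext => q.
rewrite /Sinv /S21 -mulrA; congr (_ * (_ * _)).
Qed.

Lemma fin_Q3 (w : I3 -> C) (f : I3 -> I3) : bijective f -> fin_supp w -> fin_supp (fun q => w (f q)).
Proof.
case=> g fg gf fw.
apply: (sub_finite_set _ (finite_image g fw)) => q /= h; exists (f q) => //.
Qed.

Lemma transl (sc : I2 -> I2 -> int -> C) y (w : I3 -> C) :
  (Sser (Sinv sc) (Y1 y (fun q => w (Q3i q))) =
     Y1d y (dapp (S13_xpz (Sinv sc)) (dapp (S23_x (Sinv sc)) (dcst (fun q => w (Q3i q)))))) <->
  (Sser sc (Y2 y w) = Y2d y (dapp (S12_xmz sc) (dapp (S13_x sc) (dcst w)))).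
Proof.
rewrite !dapp_gapp !dcst_dcstg dcst_Phi (gapp_Phi (S13_x sc)); last exact: S23_Phi.
rewrite (gapp_Phi (S12_xmz sc)); last exact: S13_Phi.
split => h.
  apply: funext => p; apply: funext => m; apply: funext => n.
  have := congr1 (fun f => f (flip p) m n) h => /=.
  rewrite Sser_Phi Y1d_Phi flipK => e.
  by rewrite -[LHS]mul1r -(sgn2 m) -mulrA e mulrA sgn2 mul1r.
apply: funext => p; apply: funext => m; apply: funext => n.
by rewrite Sser_Phi Y1d_Phi h.
Qed.

End C.
Local Close Scope classical_set_scope.
Arguments elb {I}. Arguments KI2 {I}. Arguments KI3 {I}.
Arguments colX {I}. Arguments transl {I}. Arguments Q3 {I}. Arguments Q3i {I}. Arguments YKy {I}.

Theorem lemma3p6 (I : choiceType)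
  (y : I -> I -> int -> I -> C) (vac : I -> C)
  (sc : (I * I) -> (I * I) -> int -> C) :
  nonlocal_va y vac -> rqyb_operator sc -> unitary sc ->
  (* (a) *)
  ((forall v, fin_supp v -> lapp sc (cst (ten vac v)) = cst (ten vac v)) <->
   (forall v, fin_supp v -> lapp sc (cst (ten v vac)) = cst (ten v vac)))
  /\
  (* (b) [D(x)1, S(x)] = - d/dx S(x)  <->  [1(x)D, S^{-1}(x)] = d/dx S^{-1}(x) *)
  ((forall w, fin_supp w -> forall p n,
      DL (Dm y vac) (lapp sc (cst w)) p n - lapp sc (DL (Dm y vac) (cst w)) p n
      = - lapp (lder sc) (cst w) p n) <->
   (forall w, fin_supp w -> forall p n,
      DR (Dm y vac) (lapp (Sinv sc) (cst w)) p n
        - lapp (Sinv sc) (DR (Dm y vac) (cst w)) p n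
      = lapp (lder (Sinv sc)) (cst w) p n))
  /\
  (* (c) *)
  ((forall w : (I * I) * I -> C, fin_supp w ->
      Sser sc (Y1 y w) = Y1d y (dapp (S23_x sc) (dapp (S13_xpz sc) (dcst w)))) <->
   (forall w : (I * I) * I -> C, fin_supp w ->
      Sser sc (Y2 y w) = Y2d y (dapp (S12_xmz sc) (dapp (S13_x sc) (dcst w))))).
Proof.
move=> [hy1 [hy2 [hvac _]]] [hc1 [hc2 _]] U.
have flipten : forall u v : I -> C, (fun p => ten u v (flip p)) = ten v u.
  by move=> u v; apply: funext => -[a b]; rewrite /ten /= mulrC.
split; [|split].
- split => h v fv.
    apply: key_a => //; first exact: fin_supp_ten.
    by rewrite flipten; apply: h.
  apply: key_a => //; first exact: fin_supp_ten.
  by rewrite flipten; apply: h.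
- split => h w fw.
    by apply/(key_b _ sc (Dm y vac) w); apply: h; exact: fin_supp_flip.
  have := proj2 (key_b _ sc (Dm y vac) (fun p => w (flip p))) (h _ (fin_supp_flip _ _ fw)).
  have -> : (fun p => w (flip (flip p))) = w by apply: funext => p; rewrite flipK.
  by [].
-
  pose T := Sinv sc.
  have cS : colX sc by move=> q; exact: hc1.
  have lS : elb sc by move=> p q; exact: hc2.
  have cT : colX T by exact: colX_Sinv.
  have lT : elb T by exact: elb_Sinv.
  have LST : LU sc T by apply: LU_of => w fw; exact: U.
  have LTS : LU T sc by apply: LU_of => w fw; exact: unit_left.
  have [Y1 Y2 Y3] := YK_props _ y hy1 hy2.
  have [S1 S2 S3] := SK_props _ sc cS lS.
  have [T1 T2 T3] := SK_props _ T cT lT.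
  split => h w fw.
    apply/transl; rewrite Sser_gapp Y1d_gapp !dapp_gapp dcst_dcstg.
    apply: (core (YKy y) (SK sc) (SK T) (S23_x sc) (S13_xpz sc) (S23_x T) (S13_xpz T)) => //.
    + exact: S23_good.
    + exact: S13_good.
    + exact: S23_good.
    + exact: S13_good.
    + exact: KI2.
    + exact: KI3.
    + exact: KI1.
    + move=> w' fw'; have := h w' fw'.
      by rewrite Sser_gapp Y1d_gapp !dapp_gapp dcst_dcstg.
    + apply: fin_Q3 => //; exact: (Bijective (Q3iK I) (Q3K I)).
  rewrite Sser_gapp Y1d_gapp !dapp_gapp dcst_dcstg.
  apply: (core (YKy y) (SK T) (SK sc) (S13_xpz T) (S23_x T) (S13_xpz sc) (S23_x sc)) => //.
  + exact: S13_good.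
  + exact: S23_good.
  + exact: S13_good.
  + exact: S23_good.
  + exact: KI3.
  + exact: KI2.
  + exact: KI1.
  + move=> w' fw'.
    have fw'' : fin_supp (fun q => w' (Q3 q)) by apply: fin_Q3 => //; exact: (Q3_bij I).
    have := proj2 (transl sc y (fun q => w' (Q3 q))) (h _ fw'').
    have -> : (fun q => w' (Q3 (Q3i q))) = w' by apply: funext => q; rewrite Q3iK.
    by rewrite Sser_gapp Y1d_gapp !dapp_gapp dcst_dcstg.
Qed.
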